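(* Let $\varepsilon>0$, let $c=(1+\varepsilon)n$, let $D$ be a positive integer and let $\frac{\log n}{n}\le p\le\frac{2\log n}{n}$. Then with probability $1-o(1)$ the graph $G\sim\mathcal G_c(n,p)$ has the following property: for every $j\le\frac{n}{\log^{0.9}n}$ and every collection of $j$ vertex-disjoint stars in $G$, each with $\log^{0.2}n$ edges, the number of distinct colors appearing on their edges is at least $2Dj$.
   Context: $\mathcal G_c(n,p)$: random graph on $[n]$, each pair an edge independently with probability $p$, each edge colored uniformly and independently from $[c]$. Asymptotics as $n\to\infty$. *)

(* Defs.v *)
From HB Require Import structures.
From mathcomp Require Import all_boot all_order all_algebra.
From mathcomp Require Import all_classical all_reals all_analysis.
Set Implicit Arguments. Unset Strict Implicit. Unset Printing Implicit Defensive.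
Import Order.TTheory GRing.Theory Num.Theory.
Local Open Scope ring_scope.

(* Unordered pairs {u,v} of [n] represented as (u,v) with u < v. *)
Definition pairT (n : nat) : finType := {x : 'I_n * 'I_n | (x.1 < x.2)%N}.

(* An outcome of G_c(n,p): for each pair, None = non-edge,
   Some a = edge with color a. *)
Definition config (n c : nat) : finType := {ffun pairT n -> option 'I_c}.

Definition lab (n c : nat) (w : config n c) (u v : 'I_n) : option 'I_c :=
  match (insub (u, v) : option (pairT n)) with
  | Some e => w e
  | None => match (insub (v, u) : option (pairT n)) with
            | Some e => w e
            | None => None
            end
  end.

(* Probability of outcome w: independent edges with prob p,
   independent uniform colors in [c]. *)
Definition weight (R : realType) (n c : nat) (p : R) (w : config n c) : R :=
  \prod_(e : pairT n) (if w e is Some _ then p / c%:R else 1 - p).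

Definition prob (R : realType) (n c : nat) (p : R) (E : pred (config n c)) : R :=
  \sum_(w : config n c | E w) weight p w.

Definition ncolors (R : realType) (eps : R) (n : nat) : nat :=
  Num.truncn ((1 + eps) * n%:R).

Definition star_size (R : realType) (n : nat) : nat :=
  Num.truncn ((ln (n%:R : R)) `^ (5%:R^-1)).

Definition disjoint_stars (n c j k : nat) (w : config n c)
  (ctr : 'I_j -> 'I_n) (lvs : 'I_j -> {set 'I_n}) : Prop :=
  (forall i, #|lvs i| = k) /\
  (forall i, ctr i \notin lvs i) /\
  (forall i l, l \in lvs i -> lab w (ctr i) l != None) /\
  (forall i i', i != i' ->
     [disjoint (ctr i |: lvs i) & (ctr i' |: lvs i')]).

Definition star_colors (n c j : nat) (w : config n c)
  (ctr : 'I_j -> 'I_n) (lvs : 'I_j -> {set 'I_n}) : {set 'I_c} :=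
  [set a | [exists i, exists l in lvs i, lab w (ctr i) l == Some a]].

Definition good_property (R : realType) (D : nat) (n c : nat) (w : config n c) : Prop :=
  forall (j : nat), (j%:R <= (n%:R : R) / (ln (n%:R : R)) `^ (9%:R / 10%:R)) ->
  forall (ctr : 'I_j -> 'I_n) (lvs : 'I_j -> {set 'I_n}),
    @disjoint_stars n c j (star_size R n) w ctr lvs ->
    (2 * D * j <= #|star_colors w ctr lvs|)%N.

Definition probP (R : realType) (n c : nat) (p : R) (E : config n c -> Prop) : R :=
  prob p (fun w => `[< E w >]).

(* Main.v *)
Require Import Defs.
From mathcomp Require Import all_boot all_order all_algebra.
From mathcomp Require Import all_classical all_reals all_analysis.
Import Order.TTheory GRing.Theory Num.Theory.
Import numFieldNormedType.Exports.
Local Open Scope ring_scope.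
Set Implicit Arguments. Unset Strict Implicit.
From mathcomp Require Import ring lra zify.

Lemma sum_option (R : realType) (T : finType) (F : option T -> R) :
  \sum_(o : option T) F o = F None + \sum_(x : T) F (Some x).
Proof.
rewrite (bigD1 None) //=; congr (_ + _).
rewrite (reindex_omap Some id); last by case.
by apply: eq_bigl => x /=; rewrite eqxx.
Qed.

Definition fw (R : realType) (c : nat) (p : R) (o : option 'I_c) : R :=
  if o is Some _ then p / c%:R else 1 - p.
Arguments fw {R c} p o.

Lemma weightE (R : realType) n c (p : R) (w : config n c) :
  weight p w = \prod_e fw p (w e).
Proof. by []. Qed.

Lemma fw_ge0 (R : realType) c (p : R) (o : option (ordinal c)) : 0 <= p <= 1 -> 0 <= fw p o.
Proof.
case/andP=> p0 p1; case: o => [a|] /=; last by rewrite subr_ge0.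
by rewrite divr_ge0.
Qed.

Lemma weight_ge0 (R : realType) n c (p : R) (w : config n c) :
  0 <= p <= 1 -> 0 <= weight p w.
Proof. by move=> hp; rewrite weightE; apply: prodr_ge0 => e _; exact: fw_ge0. Qed.

Lemma prob_family (R : realType) n c (p : R) (A : pairT n -> pred (option 'I_c)) :
  prob p (fun w : config n c => [forall e, A e (w e)]) =
  \prod_e \sum_(o | A e o) fw p o.
Proof.
rewrite (bigA_distr_big_dep _ (fun e o => fw p o)) /prob.
apply: eq_bigl => w; apply/forallP/familyP => H e; exact: H.
Qed.

Lemma sum_fw (R : realType) c (p : R) : (0 < c)%N -> \sum_(o : option 'I_c) fw p o = 1.
Proof.
move=> c0; rewrite sum_option /= sumr_const card_ord.
rewrite -[p / _ *+ _]mulr_natr mulfVK ?subrK //.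
by rewrite pnatr_eq0 -lt0n.
Qed.

Lemma prob_total (R : realType) n c (p : R) : (0 < c)%N ->
  \sum_(w : config n c) weight p w = 1.
Proof.
move=> c0; have := @prob_family R n c p (fun _ _ => true).
rewrite /prob.
have -> : \sum_(w : config n c | [forall e : pairT n, true]) weight p w = \sum_(w : config n c) weight p w.
  by apply: eq_bigl => w; apply/forallP.
move=> ->; under eq_bigr do rewrite sum_fw //.
by rewrite big1.
Qed.

Lemma prob_compl (R : realType) n c (p : R) (P : pred (config n c)) : (0 < c)%N ->
  prob p P = 1 - prob p (predC P).
Proof.
move=> c0; rewrite -(@prob_total R n c p c0) (bigID P) /= /prob.
by rewrite addrK.
Qed.

Lemma prob_le (R : realType) n c (p : R) (P Q : pred (config n c)) :
  0 <= p <= 1 -> (forall w, P w -> Q w) -> prob p P <= prob p Q.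
Proof.
move=> hp PQ; rewrite /prob [X in _ <= X]big_mkcond [X in X <= _]big_mkcond.
apply: ler_sum => w _; case: ifP => Pw; first by rewrite PQ.
by case: ifP => // _; exact: weight_ge0.
Qed.

Lemma prob_union (R : realType) n c (p : R) (I : finType) (cond : pred I)
  (Q : I -> pred (config n c)) (P : pred (config n c)) :
  0 <= p <= 1 -> (forall w, P w -> exists i, cond i && Q i w) ->
  prob p P <= \sum_(i | cond i) prob p (Q i).
Proof.
move=> hp HP; rewrite /prob.
under [X in _ <= X]eq_bigr do rewrite big_mkcond.
rewrite (exchange_big_dep predT) //= [X in X <= _]big_mkcond /=.
apply: ler_sum => w _; case: ifP => Pw; last first.
  by apply: sumr_ge0 => i' _; case: ifP => // _; exact: weight_ge0.
have [i /andP[ci Qi]] := HP w Pw.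
rewrite (bigD1 i) ?ci //= Qi ler_wpDr //.
apply: sumr_ge0 => i' _; case: ifP => // _; exact: weight_ge0.
Qed.

Definition ep n (u v : 'I_n) : option (pairT n) :=
  if (insub (u, v) : option (pairT n)) is Some e then Some e
  else (insub (v, u) : option (pairT n)).

Lemma lab_ep n c (w : config n c) (u v : 'I_n) :
  lab w u v = if ep u v is Some e then w e else None.
Proof.
by rewrite /lab /ep; case: (insub (u, v)) => //; case: (insub (v, u)).
Qed.

Lemma ep_val n (u v : 'I_n) e : ep u v = Some e -> val e = (u, v) \/ val e = (v, u).
Proof.
rewrite /ep; case: insubP => [e' _ He' [<-]|_]; first by left.
by case: insubP => [e' _ He' [<-]|//]; right.
Qed.

Lemma ep_some n (u v : 'I_n) : u != v -> exists e, ep u v = Some e.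
Proof.
move=> uv; rewrite /ep; case: insubP => [e' _ _|uv']; first by exists e'.
case: insubP => [e' _ _|vu']; first by exists e'.
exfalso; move: uv' vu' => /= /negP uv' /negP vu'.
have := uv; rewrite neq_ltn => /orP[]; [exact: uv' | exact: vu'].
Qed.

Definition star n (L : {ffun 'I_n -> option {set 'I_n}}) (v l : 'I_n) : bool :=
  if L v is Some A then l \in A else false.

Definition Lgood n k j (L : {ffun 'I_n -> option {set 'I_n}}) : bool :=
  (#|[set v | L v != None]| == j) &&
  [forall v, forall v', if L v is Some A then (#|A| == k) && (v \notin A) &&
       ((v != v') ==> (if L v' is Some A' then [disjoint v |: A & v' |: A'] else true))
     else true].

Definition QE n c (S : {ffun 'I_c -> bool}) (L : {ffun 'I_n -> option {set 'I_n}})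
  (w : config n c) : bool :=
  [forall v, forall l, star L v l ==> (if lab w v l is Some a then S a else false)].

Definition ncount c (S : {ffun 'I_c -> bool}) : nat := #|[set a | S a]|.

Lemma card_Pset n k j L : Lgood k j L ->
  #|[set x : 'I_n * 'I_n | star L x.1 x.2]| = (j * k)%N.
Proof.
case/andP=> /eqP Hj /forallP H.
rewrite -sum1dep_card -(pair_big_dep xpredT (fun v l => star L v l) (fun _ _ => 1%N)) /=.
have -> : (\sum_v \sum_(l | star L v l) 1 = \sum_(v in [set v | L v != None]) k)%N.
  rewrite [RHS]big_mkcond /=; apply: eq_bigr => v _; rewrite inE.
  have /forallP := H v => /(_ v).
  rewrite /star; case: (L v) => [A|] /=; last by rewrite big_pred0.
  by case/andP=> /andP[/eqP <- _] _; rewrite sum1_card.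
by rewrite sum_nat_const Hj.
Qed.

Definition Fset n (L : {ffun 'I_n -> option {set 'I_n}}) : {set pairT n} :=
  [set e | [exists v, exists l, star L v l && (ep v l == Some e)]].

Lemma star_neq n k j L v l : @Lgood n k j L -> star L v l -> v != l.
Proof.
case/andP=> _ /forallP H; have /forallP := H v => /(_ v).
rewrite /star; case: (L v) => [A|//] /andP[/andP[_ vA] _] lA.
by apply: contraNneq vA => ->.
Qed.

Lemma card_Fset n k j L : @Lgood n k j L -> (j * k <= #|Fset L|)%N.
Proof.
move=> HL; rewrite -(card_Pset HL).
set P := [set x : 'I_n * 'I_n | star L x.1 x.2].
have [P0|[x0 Px0]] := set_0Vmem P; first by rewrite P0 cards0.
have Hx0 : star L x0.1 x0.2 by move: Px0; rewrite inE.
have [e0 _] := ep_some (star_neq HL Hx0).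
set f := fun x : 'I_n * 'I_n => odflt e0 (ep x.1 x.2).
have fP : forall x, x \in P -> ep x.1 x.2 = Some (f x).
  move=> x; rewrite inE => /(star_neq HL)/ep_some [e He].
  by rewrite /f He.
rewrite -(card_in_imset (f := f)); last first.
  move=> [x1 x2] [y1 y2] Px Py fxy.
  have hx := ep_val (fP _ Px); have hy := ep_val (fP _ Py).
  rewrite -fxy in hy.
  move: Px Py; rewrite !inE /= => Px Py.
  suff swap : ~ (x1 = y2 /\ x2 = y1).
    case: hx => Ex; case: hy => Ey; rewrite Ex in Ey; case: Ey => E1 E2;
      (try by rewrite E1 E2); by exfalso; apply: swap.
  move=> [e1 e2]; subst y1 y2.
  have := star_neq HL Px.
  case/andP: HL => _ /forallP H.
  have /forallP := H x1 => /(_ x2).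
  move: Px Py; rewrite /star.
  case: (L x1) => [A|//]; case: (L x2) => [A'|//] x2A x1A' /andP[_ /implyP Hd] x12.
  have := Hd x12; rewrite -setI_eq0 => /eqP/setP/(_ x2).
  by rewrite !inE x2A eqxx orbT.
have Hs : [set f x | x in P] \subset Fset L.
  apply/fintype.subsetP => _ /imsetP [x Px ->].
  rewrite inE; apply/existsP; exists x.1; apply/existsP; exists x.2.
  by move: (Px); rewrite inE => ->; rewrite (fP _ Px) /=.
exact: subset_leq_card.
Qed.

Lemma ncount_le c (S : {ffun 'I_c -> bool}) : (ncount S <= c)%N.
Proof. by rewrite /ncount (leq_trans (max_card _)) // card_ord. Qed.

Lemma prob_QE (R : realType) n c (p : R) k j (S : {ffun 'I_c -> bool}) L : 0 <= p <= 1 -> (0 < c)%N ->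
  @Lgood n k j L ->
  prob p (QE S L) <= (p * (ncount S)%:R / c%:R) ^+ (j * k).
Proof.
move=> hp c0 HL.
set q := p * (ncount S)%:R / c%:R.
pose A := fun (e : pairT n) (o : option 'I_c) =>
  if e \in Fset L then (if o is Some a then S a else false) else true.
apply: le_trans (prob_le (Q := fun w => [forall e, A e (w e)]) hp _) _.
  move=> w /forallP HQ; apply/forallP => e; rewrite /A; case: ifP => // eF.
  move: eF; rewrite inE => /existsP[v /existsP[l /andP[Hs /eqP He]]].
  by have := HQ v => /forallP/(_ l); rewrite Hs /= lab_ep He.
rewrite prob_family.
have Hsum : forall e, \sum_(o | A e o) fw p o = if e \in Fset L then q else 1.
  move=> e; rewrite /A; case: ifP => _; last exact: sum_fw.
  rewrite big_mkcond sum_option /= add0r -big_mkcond /=.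
  rewrite (eq_bigl (fun a => a \in [set a | S a])); last by move=> a; rewrite inE.
  by rewrite sumr_const -[_ *+ #|_|]mulr_natr /q /ncount mulrAC.
under eq_bigr do rewrite Hsum.
rewrite -big_mkcond /= prodr_const.
case/andP: hp => p0 p1.
have q0 : 0 <= q by rewrite /q divr_ge0 // mulr_ge0.
apply: ler_wiXn2l => //; last exact: card_Fset HL.
rewrite /q ler_pdivrMr ?ltr0n // mul1r -[X in _ <= X]mul1r.
apply: ler_pM => //; by rewrite ler_nat ncount_le.
Qed.

Lemma sum_cond_le (R : realType) (T : finType) (P : pred T) (F : T -> R) :
  (forall x, 0 <= F x) -> \sum_(x | P x) F x <= \sum_x F x.
Proof.
move=> F0; rewrite [X in X <= _]big_mkcond; apply: ler_sum => x _.
by case: ifP.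
Qed.

Lemma count_S (R : realType) c s (y : R) : 0 < y <= 1 ->
  \sum_(S : {ffun 'I_c -> bool} | (ncount S <= s)%N) (1 : R) <= y ^- s * (1 + y) ^+ c.
Proof.
case/andP=> y0 y1.
pose g := fun b : bool => if b then y else 1.
have g0 : forall b, 0 <= g b by case => //=; exact: ltW.
apply: le_trans (_ : \sum_(S : {ffun 'I_c -> bool} | (ncount S <= s)%N)
   (y ^- s * \prod_a g (S a)) <= _).
  apply: ler_sum => S HS.
  have -> : \prod_a g (S a) = y ^+ ncount S.
    rewrite /ncount -prodr_const [RHS]big_mkcond /=.
    by apply: eq_bigr => a _; rewrite inE.
  rewrite -[1](@mulVf _ (y ^+ s)) ?expf_neq0 ?gt_eqF //.
  apply: ler_wpM2l; first by rewrite invr_ge0 exprn_ge0 // ltW.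
  by apply: ler_wiXn2l => //; exact: ltW.
apply: le_trans (sum_cond_le _ _) _.
  by move=> S; apply: mulr_ge0; [rewrite invr_ge0 exprn_ge0 // ltW | apply: prodr_ge0].
rewrite -mulr_sumr; apply: ler_wpM2l; first by rewrite invr_ge0 exprn_ge0 // ltW.
rewrite -(bigA_distr_bigA (fun (a : 'I_c) b => g b)) big_bool /=.
by rewrite prodr_const card_ord addrC.
Qed.

Lemma count_L (R : realType) n k j (y : R) : 0 < y ->
  \sum_(L : {ffun 'I_n -> option {set 'I_n}} | Lgood k j L) (1 : R) <=
     y ^- j * (1 + y * ('C(n, k))%:R) ^+ n.
Proof.
move=> y0.
pose g := fun o : option {set 'I_n} => if o is Some A then (if #|A| == k then y else 0) else 1.
have g0 : forall o, 0 <= g o by case => [A|] //=; case: ifP => // _; exact: ltW.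
apply: le_trans (_ : \sum_(L : {ffun 'I_n -> option {set 'I_n}} | Lgood k j L)
   (y ^- j * \prod_v g (L v)) <= _).
  apply: ler_sum => L HL.
  have -> : \prod_v g (L v) = y ^+ j.
    case/andP: HL => /eqP <- /forallP H.
    rewrite -prodr_const [RHS]big_mkcond /=.
    apply: eq_bigr => v _; rewrite inE.
    have /forallP := H v => /(_ v).
    by rewrite /g; case: (L v) => [A|//] /andP[/andP[-> _] _].
  by rewrite mulVf ?expf_neq0 ?gt_eqF.
apply: le_trans (sum_cond_le _ _) _.
  by move=> S; apply: mulr_ge0; [rewrite invr_ge0 exprn_ge0 // ltW | apply: prodr_ge0].
rewrite -mulr_sumr; apply: ler_wpM2l; first by rewrite invr_ge0 exprn_ge0 // ltW.
rewrite -(bigA_distr_bigA (fun (v : 'I_n) o => g o)) /=.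
rewrite sum_option /= -big_mkcond /=.
rewrite (eq_bigl (fun A => A \in [set A : {set 'I_n} | #|A| == k])); last by move=> A; rewrite inE.
by rewrite sumr_const card_draws card_ord prodr_const card_ord mulr_natr.
Qed.

Lemma witness n c k j (w : config n c) (ctr : 'I_j -> 'I_n) (lvs : 'I_j -> {set 'I_n}) :
  disjoint_stars k w ctr lvs ->
  exists S L, ncount S = #|star_colors w ctr lvs| /\ Lgood k j L /\ QE S L w.
Proof.
case=> Hk [Hc [Hl Hd]].
have inj : injective ctr.
  move=> i i' E; apply/eqP; apply/negPn/negP => /Hd.
  rewrite -setI_eq0 => /eqP/finset.setP/(_ (ctr i)).
  by rewrite !inE E eqxx.
pose S := [ffun a => a \in star_colors w ctr lvs].
pose L := [ffun v => if [pick i | ctr i == v] is Some i then Some (lvs i) else None].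
have LP : forall v A, L v = Some A -> exists i, ctr i = v /\ A = lvs i.
  move=> v A; rewrite /L ffunE; case: pickP => [i /eqP <- [<-]|//].
  by exists i.
have Lctr : forall i, L (ctr i) = Some (lvs i).
  move=> i; rewrite /L ffunE; case: pickP => [i' /eqP /inj -> //|/(_ i)].
  by rewrite eqxx.
exists S, L; split; [|split].
- by rewrite /ncount; apply: eq_card => a; rewrite inE /S ffunE.
- apply/andP; split.
    have -> : [set v | L v != None] = ctr @: [set: 'I_j].
      apply/finset.setP => v; rewrite inE; apply/idP/imsetP.
        by case E: (L v) => [A|//] _; have [i [<- _]] := LP _ _ E; exists i.
      by case=> i _ ->; rewrite Lctr.
    by rewrite card_imset // cardsT card_ord.
  apply/forallP => v; apply/forallP => v'.
  case E: (L v) => [A|//]; have [i [Ev EA]] := LP _ _ E; subst v A.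
  rewrite Hk eqxx Hc /=; apply/implyP => nv.
  case E': (L v') => [A'|//]; have [i' [Ev' EA']] := LP _ _ E'; subst v' A'.
  by apply: Hd; apply: contraNneq nv => ->.
- apply/forallP => v; apply/forallP => l; apply/implyP.
  rewrite /star; case E: (L v) => [A|//]; have [i [Ev EA]] := LP _ _ E; subst v A.
  move=> li; have := Hl _ _ li; case El: (lab w (ctr i) l) => [a|//] _.
  rewrite /S ffunE inE; apply/existsP; exists i; apply/existsP; exists l.
  by rewrite li El eqxx.
Qed.

Lemma shape (R : realType) (A B g x : R) (d m : nat) : x != 0 ->
  (A / x) ^+ d * (B / x) * (g * x) ^+ (m + d + 1) = A ^+ d * B * g ^+ (m + d + 1) * x ^+ m.
Proof.
move=> x0; rewrite expr_div_n exprMn !exprD expr1.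
by field; rewrite x0 expf_neq0.
Qed.

Lemma fact_bound (R : realType) (k : nat) : (k%:R : R) ^+ k <= expR 1 ^+ k * (k`!)%:R.
Proof.
case: k => [|k]; first by rewrite !expr0 mul1r.
have := @expR_ge1Dxn R k.+1%:R k (ler0n _ _).
rewrite -expRM_natl mulr1 => H.
have f0 : 0 < (k.+1`!)%:R :> R by rewrite ltr0n fact_gt0.
rewrite -ler_pdivrMr //; apply: le_trans H; rewrite lerDr //.
Qed.

Lemma ffact_le_exp (n k : nat) : (n ^_ k <= n ^ k)%N.
Proof.
elim: k n => [|k IH] n; first by [].
rewrite ffactnS expnS leq_mul //; apply: leq_trans (IH _) _.
by case: k {IH} => [|k]; rewrite ?expn0 // leq_exp2r // leq_pred.
Qed.

Lemma final_eq (R : realType) (a b e u : R) (d : nat) : u != 0 ->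
  (a * u ^+ 9) ^+ d * (e * u ^+ 9) * (b / u) ^+ (9 * d + 9 + 1) =
  e * a ^+ d * b ^+ (9 * d + 9 + 1) / u.
Proof.
move=> u0; rewrite !exprMn exprVn !exprD.
by field; rewrite u0 !expf_neq0.
Qed.

Lemma T_bound (R : realType) (n c k N j D : nat) (p u eps : R) :
  (0 < j)%N -> (0 < n)%N -> (0 < D)%N -> 0 < eps ->
  j%:R * u ^+ 9 <= n%:R -> n%:R <= c%:R :> R -> c%:R <= (1 + eps) * n%:R ->
  0 <= p -> n%:R * p <= 2 * u ^+ 10 ->
  (N * k`! <= n ^ k)%N ->
  (18 * D + 10 <= k)%N -> u ^+ 2 <= 2 * k%:R -> 8 * expR 1 * D%:R <= u ->
  (expR 1 * c%:R / (2 * D * j)%N%:R) ^+ (2 * D)%N * (expR 1 * n%:R * N%:R / j%:R)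
    * (p * (2 * D * j)%N%:R / c%:R) ^+ k
  <= expR 1 * (expR 1 * (1 + eps) / (2 * D%:R)) ^+ (2 * D)%N
       * (8 * expR 1 * D%:R) ^+ (18 * D + 10)%N / u.
Proof.
move=> j0 n0 D0 eps0 hj hnc hc p0 hnp hN hk hu2 hu.
set e := expR 1.
have e0 : 0 < e by rewrite expR_gt0.
have D0r : 0 < D%:R :> R by rewrite ltr0n.
have u0 : 0 < u by apply: lt_le_trans hu; rewrite !mulr_gt0.
have n0r : 0 < n%:R :> R by rewrite ltr0n.
have c0r : 0 < c%:R :> R by apply: lt_le_trans hnc.
have j0r : 0 < j%:R :> R by rewrite ltr0n.
set d := (2 * D)%N.
have d0r : 0 < d%:R :> R by rewrite ltr0n muln_gt0.
set m := (k - d.+1)%N.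
have km : k = (m + d + 1)%N.
  rewrite /m /d; clear -hk; lia.
set J := n%:R / u ^+ 9.
have J0 : 0 < J by rewrite divr_gt0 // exprn_gt0.
have jJ : j%:R <= J by rewrite /J ler_pdivlMr // exprn_gt0.
set A := e * c%:R / d%:R.
set B := e * n%:R * N%:R.
set g := p * d%:R / c%:R.
have A0 : 0 <= A by rewrite /A divr_ge0 // mulr_ge0 // ltW.
have B0 : 0 <= B by rewrite /B !mulr_ge0 // ltW.
have g0 : 0 <= g by rewrite /g divr_ge0 // mulr_ge0 // ltW.
have E1 : e * c%:R / (2 * D * j)%N%:R = A / j%:R.
  by rewrite /A natrM -/d invfM mulrA.
have E2 : p * (2 * D * j)%N%:R / c%:R = g * j%:R.
  by rewrite /g natrM -/d mulrA mulrAC.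
rewrite E1 E2 -/B -/d.
apply: le_trans (_ : (A / J) ^+ d * (B / J) * (g * J) ^+ k <= _).
  rewrite km !shape ?gt_eqF //; apply: ler_wpM2l.
    by rewrite mulr_ge0 ?exprn_ge0 // mulr_ge0 ?exprn_ge0.
  by apply: (lerXn2r m) => //; rewrite nnegrE ltW.
have u9 : 0 < u ^+ 9 by rewrite exprn_gt0.
have dD : d%:R = 2 * D%:R :> R by rewrite /d natrM.
have HA : A / J <= e * (1 + eps) / (2 * D%:R) * u ^+ 9.
  have -> : A / J = e / d%:R * u ^+ 9 * (c%:R / n%:R).
    by rewrite /A /J; field; rewrite !gt_eqF.
  have -> : e * (1 + eps) / (2 * D%:R) * u ^+ 9 = e / d%:R * u ^+ 9 * (1 + eps).
    by rewrite dD; field; rewrite gt_eqF.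
  apply: ler_wpM2l; first by rewrite mulr_ge0 ?divr_ge0 ?ltW.
  by rewrite ler_pdivrMr.
set X := g * J.
have X0 : 0 <= X by rewrite /X mulr_ge0 // ltW.
have k0 : (0 < k)%N by apply: leq_trans _ hk; rewrite addnS.
have k0r : 0 < k%:R :> R by rewrite ltr0n.
have HnX : n%:R * X <= 2 * d%:R * u.
  have -> : n%:R * X = (n%:R * p) * (n%:R / c%:R) * d%:R / u ^+ 9.
    by rewrite /X /g /J; field; rewrite !gt_eqF.
  have -> : 2 * d%:R * u = 2 * u ^+ 10 * 1 * d%:R / u ^+ 9.
    by field; rewrite gt_eqF.
  apply: ler_wpM2r; first by rewrite invr_ge0 ltW.
  apply: ler_wpM2r; first exact: ltW.
  apply: ler_pM.
  - by rewrite mulr_ge0 // ltW.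
  - by rewrite divr_ge0 // ltW.
  - exact: hnp.
  - by rewrite ler_pdivrMr // mul1r.
have HN : N%:R * (k`!)%:R <= (n%:R : R) ^+ k.
  by rewrite -natrM -natrX ler_nat.
have f0 : 0 < (k`!)%:R :> R by rewrite ltr0n fact_gt0.
set r := 2 * d%:R * u * e / k%:R.
have Hr : r <= 8 * e * D%:R / u.
  rewrite -subr_ge0.
  have -> : 8 * e * D%:R / u - r = (4 * e * D%:R) * (2 * k%:R - u ^+ 2) / (k%:R * u).
    by rewrite /r dD; field; rewrite !gt_eqF.
  apply: divr_ge0; last by rewrite mulr_ge0 // ltW.
  by rewrite mulr_ge0 ?subr_ge0 // !mulr_ge0 // ltW.
have r0 : 0 <= r by rewrite /r divr_ge0 // ?mulr_ge0 // ltW.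
have HX : N%:R * X ^+ k <= (8 * e * D%:R / u) ^+ k.
  rewrite -(ler_pM2r f0).
  apply: le_trans (_ : (2 * d%:R * u) ^+ k <= _).
    apply: le_trans (_ : (n%:R * X) ^+ k <= _); last first.
      apply: (lerXn2r k); rewrite ?nnegrE //.
      + by rewrite mulr_ge0 // ltW.
      + by rewrite !mulr_ge0 // ltW.
    rewrite mulrAC [X in _ <= X]exprMn; apply: ler_wpM2r; first exact: exprn_ge0.
    exact: HN.
  apply: le_trans (_ : r ^+ k * (k`!)%:R <= _); last first.
    by apply: ler_wpM2r; [exact: ltW | apply: (lerXn2r k) => //; rewrite nnegrE // (le_trans r0 Hr)].
  have ek0 : 0 < e ^+ k by rewrite exprn_gt0.
  rewrite -(ler_pM2r ek0).
  have -> : (2 * d%:R * u) ^+ k * e ^+ k = r ^+ k * k%:R ^+ k.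
    by rewrite -!exprMn /r; congr (_ ^+ _); field; rewrite gt_eqF.
  rewrite -mulrA; apply: ler_wpM2l; first exact: exprn_ge0.
  by rewrite mulrC; exact: fact_bound.
set a := e * (1 + eps) / (2 * D%:R).
set b := 8 * e * D%:R.
have b0 : 0 <= b by rewrite /b !mulr_ge0 // ltW.
have bu : b / u <= 1 by rewrite ler_pdivrMr // mul1r.
have -> : (A / J) ^+ d * (B / J) * X ^+ k = (A / J) ^+ d * (e * u ^+ 9) * (N%:R * X ^+ k).
  by rewrite /B /J; field; rewrite !gt_eqF.
apply: le_trans (_ : (a * u ^+ 9) ^+ d * (e * u ^+ 9) * (b / u) ^+ (18 * D + 10) <= _).
  have a0 : 0 <= a by rewrite /a !divr_ge0 ?mulr_ge0 // ltW // addr_gt0.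
  apply: ler_pM.
  - apply: mulr_ge0; first by apply: exprn_ge0; apply: divr_ge0 => //; exact: ltW.
    by apply: mulr_ge0; exact: ltW.
  - by apply: mulr_ge0 => //; exact: exprn_ge0.
  - apply: ler_wpM2r; first by apply: mulr_ge0; exact: ltW.
    apply: (lerXn2r d); rewrite ?nnegrE //.
    + by apply: divr_ge0 => //; exact: ltW.
    + by apply: mulr_ge0 => //; exact: ltW.
  - apply: le_trans HX _; apply: ler_wiXn2l => //; apply: divr_ge0 => //; exact: ltW.
have -> : (18 * D + 10 = 9 * d + 9 + 1)%N by rewrite /d; clear; lia.
by rewrite final_eq // gt_eqF.
Qed.

Lemma geom_bound (R : realType) (tau : R) (n : nat) : 0 <= tau <= 2^-1 ->
  \sum_(j < n.+1 | (0 < j)%N) tau ^+ j <= 2 * tau.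
Proof.
case/andP=> t0 t1.
rewrite big_mkcond big_ord_recl /= add0r.
under eq_bigr do rewrite exprS.
rewrite -mulr_sumr mulrC ler_wpM2r //.
have h := subrX1 tau n.
have h1 : (1 - tau) * \sum_(i < n) tau ^+ i = 1 - tau ^+ n.
  by rewrite -opprB mulNr -h opprB.
have s0 : 0 <= \sum_(i < n) tau ^+ i by apply: sumr_ge0 => i _; exact: exprn_ge0.
have tn : 0 <= tau ^+ n by exact: exprn_ge0.
have : (1 - tau) * \sum_(i < n) tau ^+ i <= 1 by rewrite h1 lerBlDr lerDl.
set s := \sum_(i < n) tau ^+ i.
move=> H; have : 2^-1 * s <= 1.
  apply: le_trans H; apply: ler_wpM2r => //; lra.
lra.
Qed.

Lemma exp_pow_bound (R : realType) (y : R) (m : nat) : 0 <= y ->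
  (1 + y) ^+ m <= expR (m%:R * y).
Proof.
move=> y0; rewrite expRM_natl; apply: (lerXn2r m); rewrite ?nnegrE.
- by rewrite addr_ge0.
- exact: expR_ge0.
- exact: expR_ge1Dx.
Qed.

Lemma per_j (R : realType) (n c k j D : nat) (p : R) :
  (0 < j)%N -> (0 < D)%N -> (2 * D * j <= c)%N -> (0 < n)%N -> (k <= n)%N -> 0 <= p ->
  \sum_(S : {ffun 'I_c -> bool} | (ncount S <= 2 * D * j)%N)
    \sum_(L : {ffun 'I_n -> option {set 'I_n}} | Lgood k j L)
      (p * (2 * D * j)%N%:R / c%:R) ^+ (j * k)
  <= ((expR 1 * c%:R / (2 * D * j)%N%:R) ^+ (2 * D)%N
       * (expR 1 * n%:R * ('C(n, k))%:R / j%:R)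
       * (p * (2 * D * j)%N%:R / c%:R) ^+ k) ^+ j.
Proof.
move=> j0 D0 sc n0 kn p0.
set s := (2 * D * j)%N.
set q := p * s%:R / c%:R.
set N := 'C(n, k).
set e := expR 1.
have e0 : 0 < e by exact: expR_gt0.
have s0 : (0 < s)%N by rewrite /s !muln_gt0 D0 j0.
have c0 : (0 < c)%N by apply: leq_trans sc.
have s0r : 0 < s%:R :> R by rewrite ltr0n.
have c0r : 0 < c%:R :> R by rewrite ltr0n.
have j0r : 0 < j%:R :> R by rewrite ltr0n.
have n0r : 0 < n%:R :> R by rewrite ltr0n.
have N0r : 0 < N%:R :> R by rewrite ltr0n bin_gt0.
have q0 : 0 <= q by rewrite /q divr_ge0 ?mulr_ge0 // ltW.
have -> : \sum_(S : {ffun 'I_c -> bool} | (ncount S <= s)%N)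
    \sum_(L : {ffun 'I_n -> option {set 'I_n}} | Lgood k j L) q ^+ (j * k) =
    (\sum_(S : {ffun 'I_c -> bool} | (ncount S <= s)%N) 1) *
    ((\sum_(L : {ffun 'I_n -> option {set 'I_n}} | Lgood k j L) 1) * q ^+ (j * k)).
  rewrite mulr_suml; apply: eq_bigr => S _; rewrite mul1r mulr_suml.
  by apply: eq_bigr => L _; rewrite mul1r.
have hS : \sum_(S : {ffun 'I_c -> bool} | (ncount S <= s)%N) (1 : R) <= (e * c%:R / s%:R) ^+ s.
  have y0 : 0 < s%:R / c%:R :> R by rewrite divr_gt0.
  have y1 : s%:R / c%:R <= 1 :> R by rewrite ler_pdivrMr // mul1r ler_nat.
  apply: le_trans (count_S _ _ (y := s%:R / c%:R) _) _; first by rewrite y0 y1.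
  apply: le_trans (_ : (s%:R / c%:R) ^- s * expR (c%:R * (s%:R / c%:R)) <= _).
    apply: ler_wpM2l; first by rewrite invr_ge0 exprn_ge0 // ltW.
    by apply: exp_pow_bound; exact: ltW.
  have -> : c%:R * (s%:R / c%:R) = s%:R * 1 :> R by field; rewrite gt_eqF.
  rewrite expRM_natl -/e -exprVn invf_div -exprMn.
  by rewrite le_eqVlt; apply/orP; left; apply/eqP; congr (_ ^+ _); field; rewrite !gt_eqF.
have hL : \sum_(L : {ffun 'I_n -> option {set 'I_n}} | Lgood k j L) (1 : R) <=
    (e * n%:R * N%:R / j%:R) ^+ j.
  have y0 : 0 < j%:R / (n%:R * N%:R) :> R by rewrite divr_gt0 // mulr_gt0.
  apply: le_trans (count_L n k j y0) _.
  apply: le_trans (_ : (j%:R / (n%:R * N%:R)) ^- j * expR (n%:R * (j%:R / (n%:R * N%:R) * N%:R)) <= _).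
    apply: ler_wpM2l; first by rewrite invr_ge0 exprn_ge0 // ltW.
    by apply: exp_pow_bound; rewrite mulr_ge0 // ltW.
  have -> : n%:R * (j%:R / (n%:R * N%:R) * N%:R) = j%:R * 1 :> R.
    by field; rewrite !gt_eqF.
  rewrite expRM_natl -/e -exprVn invf_div -exprMn; apply: lerXn2r; rewrite ?nnegrE.
  - by rewrite mulr_ge0 ?divr_ge0 ?mulr_ge0 // ltW.
  - by rewrite !mulr_ge0 ?divr_ge0 // ltW.
  - by rewrite le_eqVlt; apply/orP; left; apply/eqP; field; rewrite !gt_eqF.
apply: le_trans (_ : (e * c%:R / s%:R) ^+ s * ((e * n%:R * N%:R / j%:R) ^+ j * q ^+ (j * k)) <= _).
  apply: ler_pM.
  - by apply: sumr_ge0.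
  - by rewrite mulr_ge0 ?exprn_ge0 //; apply: sumr_ge0.
  - exact: hS.
  - by apply: ler_wpM2r; [exact: exprn_ge0 | exact: hL].
rewrite !exprMn /s -!exprM [(k * j)%N]mulnC.
by rewrite mulrA.
Qed.

Lemma bad_bound (R : realType) (eps : R) (D n : nat) (p tau : R) :
  0 <= p <= 1 -> (0 < D)%N -> (0 < n)%N -> (star_size R n <= n)%N ->
  (0 < ncolors eps n)%N -> 0 <= tau <= 2^-1 ->
  (forall j : nat, (0 < j)%N -> j%:R <= n%:R / ln (n%:R : R) `^ (9%:R / 10%:R) ->
      (2 * D * j <= ncolors eps n)%N /\
      (expR 1 * (ncolors eps n)%:R / (2 * D * j)%N%:R) ^+ (2 * D)%N
       * (expR 1 * n%:R * ('C(n, star_size R n))%:R / j%:R)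
       * (p * (2 * D * j)%N%:R / (ncolors eps n)%:R) ^+ (star_size R n) <= tau) ->
  prob p (fun w : config n (ncolors eps n) => ~~ `[< good_property R D w >]) <= 2 * tau.
Proof.
move=> hp D0 n0 kn c0 ht H.
set c := ncolors eps n; set k := star_size R n.
set Jn := n%:R / ln (n%:R : R) `^ (9%:R / 10%:R).
have p0 : 0 <= p by case/andP: hp.
pose P1 := fun j : 'I_n.+1 => (0 < j)%N && (j%:R <= Jn).
pose P2 := fun (j : 'I_n.+1)
  (y : {ffun 'I_c -> bool} * {ffun 'I_n -> option {set 'I_n}}) =>
  (ncount y.1 <= 2 * D * j)%N && Lgood k j y.2.
apply: le_trans (prob_union (cond := fun x => P1 x.1 && P2 x.1 x.2)
   (Q := fun x => QE x.2.1 x.2.2) hp _) _.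
  move=> w /asboolPn Hbad; apply: contrapT => Hno; apply: Hbad => j Hj ctr lvs ds.
  rewrite leqNgt; apply/negP => Hlt.
  have [S [L [HS [HL HQ]]]] := witness ds.
  have jn : (j < n.+1)%N.
    case/andP: (HL) => /eqP <- _; rewrite ltnS; apply: leq_trans (max_card _) _.
    by rewrite card_ord.
  have j0 : (0 < j)%N.
    by have := leq_ltn_trans (leq0n _) Hlt; rewrite !muln_gt0 => /andP[_ ->].
  apply: Hno; exists (Ordinal jn, (S, L)).
  by rewrite /P1 /P2 /= j0 Hj HL HS (ltnW Hlt) HQ.
apply: le_trans (_ : \sum_(x | P1 x.1 && P2 x.1 x.2)
   (p * (2 * D * x.1)%N%:R / c%:R) ^+ (x.1 * k) <= _).
  apply: ler_sum => x /andP[_ /andP[HS HL]].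
  apply: le_trans (prob_QE _ hp c0 HL) _.
  apply: (lerXn2r _); rewrite ?nnegrE.
  - by rewrite divr_ge0 ?mulr_ge0.
  - by rewrite divr_ge0 ?mulr_ge0.
  - by apply: ler_wpM2r; [rewrite invr_ge0 | apply: ler_wpM2l => //; rewrite ler_nat].
rewrite -(pair_big_dep P1 P2 (fun j y => (p * (2 * D * j)%N%:R / c%:R) ^+ (j * k))) /=.
apply: le_trans (_ : \sum_(j | P1 j) tau ^+ j <= _).
  apply: ler_sum => j /andP[j0 Hj].
  rewrite -(pair_big_dep (fun S => (ncount S <= 2 * D * j)%N) (fun _ L => Lgood k j L)
    (fun _ _ => (p * (2 * D * j)%N%:R / c%:R) ^+ (j * k))) /=.
  have [hs hT] := H j j0 Hj.
  apply: le_trans (per_j j0 D0 hs n0 kn p0) _.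
  apply: (lerXn2r _); rewrite ?nnegrE //; last by case/andP: ht.
  rewrite !mulr_ge0 ?exprn_ge0 ?divr_ge0 ?mulr_ge0 //; exact: expR_ge0.
apply: le_trans (_ : \sum_(j < n.+1 | (0 < j)%N) tau ^+ j <= _); last exact: geom_bound.
rewrite [X in X <= _]big_mkcond [X in _ <= X]big_mkcond; apply: ler_sum => j _.
rewrite /P1; case: (0 < j)%N => //=; case: ifP => // _.
by apply: exprn_ge0; case/andP: ht.
Qed.

Unset Implicit Arguments.
Import numFieldNormedType.Exports.
Local Open Scope classical_set_scope.
Local Open Scope ring_scope.

Theorem lemma6 (R : realType) (eps : R) (D : nat) (p : nat -> R) :
  0 < eps -> (0 < D)%N ->
  (exists N : nat, forall n : nat, (N <= n)%N ->
     ln (n%:R : R) / n%:R <= p n <= 2 * ln (n%:R : R) / n%:R) ->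
  (fun n => probP (p n) (fun w : config n (ncolors eps n) => good_property R D w))
    @ \oo --> (1 : R).
Proof.
move=> eps0 D0 [N0 HN0].
apply/cvgrPdist_le => delta d0.
set e := expR (1 : R).
have e0 : 0 < e := expR_gt0 1.
have D0r : 0 < D%:R :> R by rewrite ltr0n.
set a := e * (1 + eps) / (2 * D%:R).
set b := 8 * e * D%:R.
have a0 : 0 < a by rewrite /a divr_gt0 ?mulr_gt0 // addr_gt0.
have b0 : 0 < b by rewrite /b !mulr_gt0.
set Kc := e * a ^+ (2 * D)%N * b ^+ (18 * D + 10)%N.
have Kc0 : 0 < Kc by rewrite /Kc !mulr_gt0 // exprn_gt0.
set U0 := b + 2 * D%:R + (18 * D + 11)%N%:R + 8 + 2 * Kc + 2 * Kc / delta.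
have h2 : 0 <= 2 * Kc by rewrite mulr_ge0 // ltW.
have h1 : 0 <= 2 * Kc / delta := divr_ge0 h2 (ltW d0).
have h3 : 0 <= (18 * D + 11)%N%:R :> R by [].
have h4 : 0 <= 2 * D%:R :> R by rewrite mulr_ge0 // ltW.
have hUb : b <= U0 by rewrite /U0; lra.
have hUD : 2 * D%:R <= U0 by rewrite /U0; lra.
have hUk : (18 * D + 11)%N%:R <= U0 by rewrite /U0; lra.
have hU8 : 8 <= U0 by rewrite /U0; lra.
have hUK : 2 * Kc <= U0 by rewrite /U0; lra.
have hUd : 2 * Kc / delta <= U0 by rewrite /U0; lra.
clear h1 h2 h3 h4.
exists (Num.truncn (expR (U0 ^+ 10)) + N0 + 1)%N => // n /= hn.
have n0 : (0 < n)%N by move: hn; clear; lia.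
have hN0n : (N0 <= n)%N by move: hn; clear; lia.
have n0r : 0 < n%:R :> R by rewrite ltr0n.
have hexp : expR (U0 ^+ 10) < n%:R.
  have := @truncn_itv _ (expR (U0 ^+ 10)) (expR_ge0 _) => /andP[_ h].
  apply: lt_le_trans h _; rewrite ler_nat; move: hn; clear; lia.
set L := ln (n%:R : R).
have hnL : expR L = n%:R by rewrite /L lnK // posrE.
have hL : U0 ^+ 10 <= L.
  rewrite -[U0 ^+ 10]expRK /L ler_ln ?posrE ?expR_gt0 //; exact: ltW.
have U0p : 1 <= U0 by lra.
have L0 : 0 <= L by apply: le_trans hL; rewrite exprn_ge0 //; lra.
set u := L `^ (10%:R^-1).
have u0 : 0 <= u by exact: powR_ge0.
have hu10 : u ^+ 10 = L.
  by rewrite -powR_mulrn // -powRrM mulVf // powRr1.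
have hu9 : L `^ (9%:R / 10%:R) = u ^+ 9.
  by rewrite -powR_mulrn // -powRrM mulrC.
have hu2 : L `^ (5%:R^-1) = u ^+ 2.
  by rewrite -powR_mulrn // -powRrM; congr (_ `^ _); field; rewrite ?pnatr_eq0.
have hU : U0 <= u.
  rewrite -(ler_pXn2r (n := 10)) ?nnegrE //; last lra.
  by rewrite hu10.
have u1 : 1 <= u by lra.
have u0' : 0 < u by lra.
have uu2 : u <= u ^+ 2 by rewrite expr2 ler_peMr.
have u2u10 : u ^+ 2 <= u ^+ 10 by apply: ler_weXn2l.
have hkdef : star_size R n = Num.truncn (u ^+ 2) by rewrite /star_size -/L hu2.
set k := star_size R n.
have hkitv := @truncn_itv _ (u ^+ 2) (exprn_ge0 _ u0).
rewrite -hkdef in hkitv; case/andP: hkitv => hk1 hk2.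
have hk : (18 * D + 10 <= k)%N.
  rewrite /k hkdef truncn_ge_nat ?exprn_ge0 //.
  apply: (le_trans _ uu2); apply: (le_trans _ hU); apply: (le_trans _ hUk).
  by rewrite ler_nat leq_add2l.
have k1 : (1 <= k)%N by apply: leq_trans hk; rewrite addnS.
have hku : u ^+ 2 <= 2 * k%:R.
  apply: ltW; apply: lt_le_trans hk2 _.
  have : 1 <= k%:R :> R by rewrite ler1n.
  rewrite -natr1; lra.
have hLn : L <= n%:R by rewrite -hnL; apply: le_trans (expR_ge1Dx L); lra.
have hkn : (k <= n)%N.
  rewrite -(ler_nat R); apply: le_trans hk1 _; apply: le_trans u2u10 _; by rewrite hu10.
set c := ncolors eps n.
have hcitv := @truncn_itv _ ((1 + eps) * n%:R) (mulr_ge0 (addr_ge0 ler01 (ltW eps0)) (ler0n _ n)).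
rewrite -/(ncolors eps n) -/c in hcitv; case/andP: hcitv => hc1 _.
have hnc : (n <= c)%N.
  rewrite /c /ncolors truncn_ge_nat; last by rewrite mulr_ge0 // addr_ge0 // ltW.
  rewrite -[X in X <= _]mul1r; apply: ler_wpM2r; [exact: ler0n | lra].
have hncr : n%:R <= c%:R :> R by rewrite ler_nat.
have c0 : (0 < c)%N by apply: leq_trans hnc.
have [hp1 hp2] : L / n%:R <= p n /\ p n <= 2 * L / n%:R by apply/andP; exact: HN0.
have p0 : 0 <= p n by apply: le_trans hp1; rewrite divr_ge0.
have hnp : n%:R * p n <= 2 * u ^+ 10.
  rewrite hu10 mulrC -ler_pdivlMr //.
have pl1 : p n <= 1.
  apply: le_trans hp2 _; rewrite ler_pdivrMr // mul1r -hnL.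
  have : expR (L / 2) ^+ 2 = expR L by rewrite -expRM_natl; congr expR; field.
  move=> <-.
  have h1 : 1 + L / 2 <= expR (L / 2) := expR_ge1Dx _.
  have h2 : (1 + L / 2) ^+ 2 <= expR (L / 2) ^+ 2.
    by apply: (lerXn2r 2); rewrite ?nnegrE ?expR_ge0 //; lra.
  apply: le_trans h2; rewrite expr2; nra.
set tau := Kc / u.
have t0 : 0 <= tau by rewrite divr_ge0 // ltW.
have t1 : tau <= 2^-1.
  rewrite /tau ler_pdivrMr //; lra.
have t2 : 2 * tau <= delta.
  have : 2 * Kc / delta <= u by lra.
  rewrite ler_pdivrMr // => h; rewrite /tau mulrA ler_pdivrMr //; lra.
rewrite /probP (prob_compl _ _ c0).
rewrite opprB addrC subrK ger0_norm; last first.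
  by rewrite /prob; apply: sumr_ge0 => w _; apply: weight_ge0; rewrite p0 pl1.
apply: le_trans t2.
apply: (bad_bound (p := p n)) => //; first by rewrite p0 pl1.
- by rewrite t0 t1.
- move=> j j0; rewrite -/L hu9 => hj.
  have u9 : 0 < u ^+ 9 by rewrite exprn_gt0.
  have hj' : j%:R * u ^+ 9 <= n%:R by rewrite -ler_pdivlMr.
  have uu9 : u <= u ^+ 9 by apply: ler_eXnr.
  split.
    rewrite -(ler_nat R) natrM; apply: le_trans hncr.
    apply: le_trans hj'; rewrite natrM mulrC ler_wpM2l //.
    lra.
  apply: le_trans (T_bound (N := 'C(n, star_size R n)) j0 n0 D0 eps0 hj' hncr hc1 p0 hnp _ hk hku _) _.
  + by rewrite bin_ffact; exact: ffact_le_exp.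
  + by apply: le_trans hU; apply: le_trans hUb.
  + by [].
Qed.
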